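(* Let $L$ be the adjoint module of $gl(1|1)$; it is of type $\mathrm{III}_1$. For every $n\ge1$, \[ L^{\otimes n}\cong\mathrm{III}_1^{\otimes n}\cong\bigoplus_{\ell=-n+2}^{n}\binom{2n-2}{n-\ell}\,\mathrm{III}_\ell \] (parities of highest-weight vectors suppressed).
   Context: $gl(1|1)$ is the Lie superalgebra with basis $H,G$ (even), $Q_+,Q_-$ (odd), nonzero supercommutators $[G,Q_\pm]=\pm Q_\pm$, $[Q_+,Q_-]=H$ (so $Q_+Q_-+Q_-Q_+=H$ in the enveloping algebra). A weight is a $G$-eigenvalue. $\mathrm{III}_\gamma$ denotes the module with basis $v,Q_+v,Q_-v,Q_+Q_-v$ (all nonzero) of $G$-weights $\gamma-1,\gamma,\gamma-2,\gamma-1$, with $H$ acting by $0$ and $Q_-Q_+v=-Q_+Q_-v$ (with either parity of the highest-weight vector $Q_+v$). Tensor products of $\mathbb Z_2$-graded modules carry the usual super action. *)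

(* Defs.v *)
(* Finite-dimensional Z/2-graded representations of gl(1|1)
   over the complex algebraic numbers algC, encoded by matrices acting on
   column vectors (operator X acts as v |-> X *m v). *)
From HB Require Import structures.
From mathcomp Require Import all_boot all_order all_algebra all_field.
From mathcomp Require Import mxtens.
Set Implicit Arguments. Unset Strict Implicit. Unset Printing Implicit Defensive.
Import Order.TTheory GRing.Theory Num.Theory.
Local Open Scope ring_scope.

(* A super representation: a finite-dim space F^dim, its parity operator
   P (+1 on even, -1 on odd vectors) and the action of H, G, Q+, Q-. *)
Record srep := SRep {
  sdim : nat;
  sP  : 'M[algC]_sdim;
  sH  : 'M[algC]_sdim;
  sG  : 'M[algC]_sdim;
  sQp : 'M[algC]_sdim;
  sQm : 'M[algC]_sdim }.

(* Defining relations of a gl(1|1)-supermodule (not needed in the statement,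
   recorded for reference): P involutive, H,G even, Q odd, supercommutators. *)
Definition is_gl11_smodule (V : srep) : Prop :=
  let: SRep _ P H G Qp Qm := V in
  [/\ [/\ P *m P = 1%:M, P *m H = H *m P, P *m G = G *m P,
          P *m Qp = - (Qp *m P) & P *m Qm = - (Qm *m P)],
      [/\ H *m G = G *m H, H *m Qp = Qp *m H & H *m Qm = Qm *m H],
      [/\ G *m Qp - Qp *m G = Qp, G *m Qm - Qm *m G = - Qm
        & Qp *m Qm + Qm *m Qp = H]
    & Qp *m Qp = 0 /\ Qm *m Qm = 0].

(* Tensor product with the super sign rule:
   X(v (x) w) = Xv (x) w + (-1)^{|X||v|} v (x) Xw. *)
Definition stensor (V W : srep) : srep :=
  SRep (sP V *t sP W)
       (sH V *t 1%:M + 1%:M *t sH W)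
       (sG V *t 1%:M + 1%:M *t sG W)
       (sQp V *t 1%:M + sP V *t sQp W)
       (sQm V *t 1%:M + sP V *t sQm W).

Definition strivial : srep := @SRep 1 1%:M 0 0 0 0.

Fixpoint stpow (V : srep) (n : nat) : srep :=
  match n with 0 => strivial | n'.+1 => stensor (stpow V n') V end.

Definition sdsum (V W : srep) : srep :=
  SRep (block_mx (sP V) 0 0 (sP W)) (block_mx (sH V) 0 0 (sH W))
       (block_mx (sG V) 0 0 (sG W)) (block_mx (sQp V) 0 0 (sQp W))
       (block_mx (sQm V) 0 0 (sQm W)).

Definition szero : srep := @SRep 0 0 0 0 0 0.

Definition sbigsum (s : seq srep) : srep := foldr sdsum szero s.

(* Isomorphism of supermodules: an invertible, even (parity-preserving)
   intertwiner. T : W -> V. *)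
Definition siso (V W : srep) : Prop :=
  exists (T : 'M[algC]_(sdim V, sdim W)) (S : 'M[algC]_(sdim W, sdim V)),
    [/\ T *m S = 1%:M, S *m T = 1%:M,
        sP V *m T = T *m sP W, sH V *m T = T *m sH W
      & [/\ sG V *m T = T *m sG W, sQp V *m T = T *m sQp W
          & sQm V *m T = T *m sQm W]].

Definition e4 (k : nat) : 'cV[algC]_4 := delta_mx (inord k) 0.

Definition mx_of_basis (f : nat -> 'cV[algC]_4) : 'M[algC]_4 :=
  \matrix_(i < 4, j < 4) f j i 0.

(* The module III_gamma, with basis
   e0 = v, e1 = Q+ v, e2 = Q- v, e3 = Q+ Q- v;
   b = parity of v (false = even), so the highest-weight vector Q+ v
   has parity ~~ b. *)
Definition III (gamma : int) (b : bool) : srep :=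
  let s : algC := (-1) ^+ b in
  let g : algC := gamma%:~R in
  @SRep 4
    (mx_of_basis (fun j => match j with
                           | 0 => s *: e4 0 | 1 => - s *: e4 1
                           | 2 => - s *: e4 2 | _ => s *: e4 3 end))
    0
    (mx_of_basis (fun j => match j with
                           | 0 => (g - 1) *: e4 0 | 1 => g *: e4 1
                           | 2 => (g - 2) *: e4 2 | _ => (g - 1) *: e4 3 end))
    (mx_of_basis (fun j => match j with
                           | 0 => e4 1 | 2 => e4 3 | _ => 0 end))
    (mx_of_basis (fun j => match j with
                           | 0 => e4 2 | 1 => - e4 3 | _ => 0 end)).

(* The adjoint module of gl(1|1), basis e0 = H, e1 = G, e2 = Q+, e3 = Q-
   (H, G even; Q+-, odd); X acts by the supercommutator ad_X(Y) = [X, Y]. *)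
Definition gl11_bracket (x y : nat) : 'cV[algC]_4 :=
  match x, y with
  | 1, 2 => e4 2
  | 1, 3 => - e4 3
  | 2, 1 => - e4 2
  | 3, 1 => e4 3
  | 2, 3 => e4 0
  | 3, 2 => e4 0
  | _, _ => 0
  end.

Definition adjoint_gl11 : srep :=
  @SRep 4
    (mx_of_basis (fun j => if (j < 2)%N then e4 j else - e4 j))
    (mx_of_basis (gl11_bracket 0))
    (mx_of_basis (gl11_bracket 1))
    (mx_of_basis (gl11_bracket 2))
    (mx_of_basis (gl11_bracket 3)).

Definition weight_range (n : nat) : seq int :=
  [seq (2 - (n%:Z) + k%:Z)%R | k <- iota 0 (2 * n - 1)].

Definition decomposition (n : nat) (par : int -> nat -> bool) : srep :=
  sbigsum (flatten
    [seq [seq III l (par l j) | j <- iota 0 'C(2 * n - 2, `|n%:Z - l|%N)]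
    | l <- weight_range n]).

(* Main.v *)
Require Import Defs.
From mathcomp Require Import all_boot all_order all_algebra all_field.
From mathcomp Require Import mxtens ring zify.
Set Implicit Arguments. Unset Strict Implicit. Unset Printing Implicit Defensive.
Import Order.TTheory GRing.Theory Num.Theory.
Local Open Scope ring_scope.

Definition intw (V W : srep) (T : 'M[algC]_(sdim V, sdim W)) : Prop :=
  [/\ sP V *m T = T *m sP W, sH V *m T = T *m sH W, sG V *m T = T *m sG W,
      sQp V *m T = T *m sQp W & sQm V *m T = T *m sQm W].

Lemma sisoP V W (T : 'M[algC]_(sdim V, sdim W)) S :
  T *m S = 1%:M -> S *m T = 1%:M -> intw T -> siso V W.
Proof. by move=> h1 h2 [a b c d e]; exists T, S; split. Qed.

Lemma intw1 V : intw (1%:M : 'M_(sdim V)).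
Proof. by split; rewrite mulmx1 mul1mx. Qed.

Lemma intw0 V W : intw (0 : 'M_(sdim V, sdim W)).
Proof. by split; rewrite mulmx0 mul0mx. Qed.

Lemma intw_comp U V W (A : 'M_(sdim U, sdim V)) (B : 'M_(sdim V, sdim W)) :
  intw A -> intw B -> intw (A *m B).
Proof.
case=> a1 a2 a3 a4 a5 [b1 b2 b3 b4 b5].
by split; rewrite mulmxA ?a1 ?a2 ?a3 ?a4 ?a5 -mulmxA ?b1 ?b2 ?b3 ?b4 ?b5 mulmxA.
Qed.

Lemma intw_inv V W (T : 'M_(sdim V, sdim W)) S :
  T *m S = 1%:M -> S *m T = 1%:M -> intw T -> intw S.
Proof.
move=> h1 h2 [a1 a2 a3 a4 a5].
have K X Y : X *m T = T *m Y -> S *m X = Y *m S.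
  move=> e; rewrite -[S *m X]mulmx1 -h1 mulmxA -(mulmxA S X) e mulmxA h2 mul1mx.
  by [].
by split; symmetry; apply: K.
Qed.

Lemma intw_row V X Y (T1 : 'M_(sdim V, sdim X)) (T2 : 'M_(sdim V, sdim Y)) :
  intw T1 -> intw T2 -> intw (V := V) (W := sdsum X Y) (row_mx T1 T2).
Proof.
case=> a1 a2 a3 a4 a5 [b1 b2 b3 b4 b5].
by split; rewrite /= mul_mx_row mul_row_block !mulmx0 addr0 add0r ?a1 ?a2 ?a3 ?a4 ?a5
  ?b1 ?b2 ?b3 ?b4 ?b5.
Qed.

Lemma intw_col X Y W (S1 : 'M_(sdim X, sdim W)) (S2 : 'M_(sdim Y, sdim W)) :
  intw S1 -> intw S2 -> intw (V := sdsum X Y) (W := W) (col_mx S1 S2).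
Proof.
case=> a1 a2 a3 a4 a5 [b1 b2 b3 b4 b5].
by split; rewrite /= mul_block_col mul_col_mx !mul0mx addr0 add0r ?a1 ?a2 ?a3 ?a4 ?a5
  ?b1 ?b2 ?b3 ?b4 ?b5.
Qed.

Lemma siso_refl V : siso V V.
Proof. by apply: (@sisoP _ _ 1%:M 1%:M); rewrite ?mulmx1 //; apply: intw1. Qed.

Lemma siso_sym V W : siso V W -> siso W V.
Proof.
case=> T [S [h1 h2 a1 a2 [a3 a4 a5]]].
have iT : intw T by split.
by apply: (@sisoP _ _ S T) => //; apply: intw_inv iT.
Qed.

Lemma siso_trans U V W : siso U V -> siso V W -> siso U W.
Proof.
case=> T [S [h1 h2 a1 a2 [a3 a4 a5]]] [T' [S' [h1' h2' b1 b2 [b3 b4 b5]]]].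
apply: (@sisoP _ _ (T *m T') (S' *m S)).
- by rewrite mulmxA -(mulmxA T) h1' mulmx1.
- by rewrite mulmxA -(mulmxA S') h2 mulmx1.
- by apply: intw_comp; split.
Qed.

Lemma siso_dsum V X Y (T1 : 'M_(sdim V, sdim X)) (T2 : 'M_(sdim V, sdim Y))
   (S1 : 'M_(sdim X, sdim V)) (S2 : 'M_(sdim Y, sdim V)) :
  intw T1 -> intw T2 -> S1 *m T1 = 1%:M -> S2 *m T2 = 1%:M ->
  S1 *m T2 = 0 -> S2 *m T1 = 0 -> T1 *m S1 + T2 *m S2 = 1%:M ->
  siso V (sdsum X Y).
Proof.
move=> i1 i2 e1 e2 e3 e4 e5.
apply: (@sisoP _ (sdsum X Y) (row_mx T1 T2) (col_mx S1 S2)).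
- by rewrite mul_row_col.
- by rewrite mul_col_row e1 e2 e3 e4 -scalar_mx_block.
- exact: intw_row.
Qed.

Section Tens.
Variables (m n p q : nat).
Implicit Types (A B : 'M[algC]_(m, n)) (C D : 'M[algC]_(p, q)).
Lemma tensmxDl A B C : (A + B) *t C = A *t C + B *t C.
Proof. by apply/matrixP=> i j; rewrite !mxE mulrDl. Qed.
Lemma tensmxDr A C D : A *t (C + D) = A *t C + A *t D.
Proof. by apply/matrixP=> i j; rewrite !mxE mulrDr. Qed.
Lemma tensmxNl A C : (- A) *t C = - (A *t C).
Proof. by apply/matrixP=> i j; rewrite !mxE mulNr. Qed.
Lemma tensmxNr A C : A *t (- C) = - (A *t C).
Proof. by apply/matrixP=> i j; rewrite !mxE mulrN. Qed.
Lemma tensmxZl (a : algC) A C : (a *: A) *t C = a *: (A *t C).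
Proof. by apply/matrixP=> i j; rewrite !mxE mulrA. Qed.
Lemma tensmxZr (a : algC) A C : A *t (a *: C) = a *: (A *t C).
Proof. by apply/matrixP=> i j; rewrite !mxE mulrCA. Qed.
End Tens.

Lemma tensmx11 m n : (1%:M : 'M[algC]_m) *t (1%:M : 'M[algC]_n) = 1%:M.
Proof.
apply/matrixP=> i j.
case: (mxtens_indexP i)=> i0 i1; case: (mxtens_indexP j)=> j0 j1.
rewrite tensmxE !mxE (inj_eq (can_inj (@mxtens_indexK m n))) xpair_eqE.
by case: (i0 == j0); case: (i1 == j1); rewrite /= ?mulr1 ?mulr0 ?mul0r.
Qed.

Lemma intw_tens V V' W W' (T : 'M_(sdim V, sdim V')) (T' : 'M_(sdim W, sdim W')) :
  intw T -> intw T' -> intw (V := stensor V W) (W := stensor V' W') (T *t T').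
Proof.
case=> a1 a2 a3 a4 a5 [b1 b2 b3 b4 b5].
by split; rewrite /= ?mulmxDl ?mulmxDr !tensmx_mul ?mul1mx ?mulmx1
  ?a1 ?a2 ?a3 ?a4 ?a5 ?b1 ?b2 ?b3 ?b4 ?b5.
Qed.

Lemma siso_tens V V' W W' : siso V V' -> siso W W' -> siso (stensor V W) (stensor V' W').
Proof.
case=> T [S [h1 h2 a1 a2 [a3 a4 a5]]] [T' [S' [h1' h2' b1 b2 [b3 b4 b5]]]].
apply: (@sisoP (stensor V W) (stensor V' W') (T *t T') (S *t S')).
- by rewrite tensmx_mul h1 h1' tensmx11.
- by rewrite tensmx_mul h2 h2' tensmx11.
- by apply: intw_tens; split.
Qed.

Lemma siso_dsumC X Y X' Y' : siso X X' -> siso Y Y' -> siso (sdsum X Y) (sdsum X' Y').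
Proof.
case=> T [S [h1 h2 a1 a2 [a3 a4 a5]]] [T' [S' [h1' h2' b1 b2 [b3 b4 b5]]]].
have iT : intw T by split.
have iT' : intw T' by split.
apply: (@siso_dsum (sdsum X Y) X' Y' (col_mx T 0) (col_mx 0 T') (row_mx S 0) (row_mx 0 S')).
- by apply: intw_col => //; apply: intw0.
- by apply: intw_col => //; apply: intw0.
- by rewrite mul_row_col mulmx0 addr0.
- by rewrite mul_row_col mul0mx add0r.
- by rewrite mul_row_col mul0mx mulmx0 addr0.
- by rewrite mul_row_col mul0mx mulmx0 addr0.
- rewrite !mul_col_row ?mulmx0 ?mul0mx h1 h1' add_block_mx ?addr0 ?add0r.
  by rewrite -scalar_mx_block.
Qed.

Lemma siso_comm X Y : siso (sdsum X Y) (sdsum Y X).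
Proof.
apply: (@siso_dsum (sdsum X Y) Y X (col_mx 0 1%:M) (col_mx 1%:M 0) (row_mx 0 1%:M) (row_mx 1%:M 0)).
- by apply: intw_col; [apply: intw0| apply: intw1].
- by apply: intw_col; [apply: intw1| apply: intw0].
- by rewrite mul_row_col mulmx0 mul1mx add0r.
- by rewrite mul_row_col mulmx0 mul1mx addr0.
- by rewrite mul_row_col mulmx0 mul0mx addr0.
- by rewrite mul_row_col mulmx0 mul0mx addr0.
- rewrite !mul_col_row ?mulmx0 ?mul0mx ?mulmx1 add_block_mx ?addr0 ?add0r.
  by rewrite -scalar_mx_block.
Qed.

Lemma siso_assoc A B C : siso (sdsum (sdsum A B) C) (sdsum A (sdsum B C)).
Proof.
apply: (@siso_dsum (sdsum (sdsum A B) C) A (sdsum B C) (col_mx (col_mx 1%:M 0) 0) (block_mx (col_mx 0 1%:M) 0 0 1%:M)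
   (row_mx (row_mx 1%:M 0) 0) (block_mx (row_mx 0 1%:M) 0 0 1%:M)).
- by apply: intw_col; [apply: intw_col; [apply: intw1|apply: intw0]|apply: intw0].
- rewrite block_mxEv; apply: intw_col; apply: intw_row.
  + by apply: intw_col; [apply: intw0|apply: intw1].
  + exact: intw0.
  + exact: intw0.
  + exact: intw1.
- by rewrite !mul_row_col ?mulmx0 ?mul0mx ?mulmx1 ?addr0.
- rewrite mulmx_block !mul_row_col ?mulmx0 ?mul0mx ?mulmx1 ?addr0 ?add0r.
  by rewrite -scalar_mx_block.
- by rewrite mul_row_block !mul_row_col ?mulmx0 ?mul0mx ?mulmx1 ?addr0 ?add0r row_mx0.
- by rewrite mul_block_col !mul_row_col ?mulmx0 ?mul0mx ?mulmx1 ?addr0 ?add0r ?col_mx0.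
- rewrite mul_col_row mulmx_block !mul_col_row ?mulmx0 ?mul0mx ?mulmx1 ?mul1mx.
  by rewrite !add_block_mx ?addr0 ?add0r add_block_mx ?addr0 ?add0r -!scalar_mx_block.
Qed.


Lemma siso_zerol Y : siso Y (sdsum szero Y).
Proof.
apply: (@siso_dsum Y szero Y 0 1%:M 0 1%:M).
- exact: intw0.
- exact: intw1.
- by rewrite flatmx0 [1%:M]flatmx0.
- by rewrite mulmx1.
- by rewrite mul0mx.
- by rewrite mulmx0.
- by rewrite mulmx1 mul0mx add0r.
Qed.

Lemma siso_tens_dsum A B C :
  siso (stensor (sdsum A B) C) (sdsum (stensor A C) (stensor B C)).
Proof.
apply: (@siso_dsum (stensor (sdsum A B) C) (stensor A C) (stensor B C) (col_mx 1%:M 0 *t 1%:M) (col_mx 0 1%:M *t 1%:M)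
   (row_mx 1%:M 0 *t 1%:M) (row_mx 0 1%:M *t 1%:M)).
- apply: intw_tens; last exact: intw1.
  by apply: intw_col; [apply: intw1|apply: intw0].
- apply: intw_tens; last exact: intw1.
  by apply: intw_col; [apply: intw0|apply: intw1].
- by rewrite tensmx_mul mul_row_col ?mulmx1 ?mulmx0 ?addr0 tensmx11.
- by rewrite tensmx_mul mul_row_col ?mulmx1 ?mulmx0 ?add0r tensmx11.
- by rewrite tensmx_mul mul_row_col ?mulmx1 ?mulmx0 ?addr0 tens0mx.
- by rewrite tensmx_mul mul_row_col ?mulmx1 ?mulmx0 ?addr0 tens0mx.
- rewrite !tensmx_mul -tensmxDl !mul_col_row ?mulmx0 ?mul0mx ?mulmx1.
  by rewrite add_block_mx ?addr0 ?add0r -scalar_mx_block tensmx11.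
Qed.

Lemma siso_tens_zero C : siso (stensor szero C) szero.
Proof.
exists 0, 0; do ![split]; apply/matrixP=> -[i Hi] -[j Hj]; move: Hi Hj; rewrite /=.
all: rewrite ?mul0n //.
Qed.

Lemma sbigsum_cat s1 s2 :
  siso (sbigsum (s1 ++ s2)) (sdsum (sbigsum s1) (sbigsum s2)).
Proof.
elim: s1 => [|x s1 IH] /=; first exact: siso_zerol.
apply: siso_trans (siso_dsumC (siso_refl x) IH) _.
exact: siso_sym (siso_assoc _ _ _).
Qed.

Lemma siso_swap a b c : siso (sdsum a (sdsum b c)) (sdsum b (sdsum a c)).
Proof.
apply: (siso_trans (siso_sym (siso_assoc a b c))).
apply: (siso_trans (siso_dsumC (siso_comm a b) (siso_refl c))).
exact: siso_assoc.
Qed.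

Lemma sbigsum_perm (I : eqType) (f : I -> srep) (s s' : seq I) :
  perm_eq s s' -> siso (sbigsum (map f s)) (sbigsum (map f s')).
Proof.
elim: s s' => [|x s1 IH] s'.
  move=> h; have -> : s' = [::] by apply/perm_nilP; rewrite perm_sym.
  exact: siso_refl.
move=> hp; have hx : x \in s' by rewrite -(perm_mem hp) mem_head.
move: hp; case/splitPr: hx => s2 s3 hp.
have {}hp : perm_eq s1 (s2 ++ s3).
  rewrite -(perm_cons x); apply: perm_trans hp _.
  by rewrite -(cat1s x s3) perm_catCA.
have := IH _ hp; rewrite map_cat => h.
apply: siso_trans (siso_dsumC (siso_refl (f x)) h) _.
apply: siso_trans (siso_dsumC (siso_refl _) (sbigsum_cat _ _)) _.
apply: siso_trans (siso_swap _ _ _) _.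
rewrite map_cat /=.
apply: siso_sym; apply: siso_trans (sbigsum_cat _ _) _.
exact: siso_refl.
Qed.

Lemma sbigsum_congr (I : Type) (f g : I -> srep) (s : seq I) :
  (forall x, siso (f x) (g x)) -> siso (sbigsum (map f s)) (sbigsum (map g s)).
Proof.
move=> h; elim: s => [|x s IH] /=; first exact: siso_refl.
exact: siso_dsumC.
Qed.

Lemma sbigsum_tens s C :
  siso (stensor (sbigsum s) C) (sbigsum (map (stensor^~ C) s)).
Proof.
elim: s => [|x s IH] /=; first exact: siso_tens_zero.
apply: siso_trans (siso_tens_dsum _ _ _) _.
exact: siso_dsumC (siso_refl _) IH.
Qed.

Lemma sbigsum_flatten (ss : seq (seq srep)) :
  siso (sbigsum (flatten ss)) (sbigsum (map sbigsum ss)).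
Proof.
elim: ss => [|s ss IH] /=; first exact: siso_refl.
apply: siso_trans (sbigsum_cat _ _) _.
exact: siso_dsumC (siso_refl _) IH.
Qed.

Definition cols n (f : nat -> 'cV[algC]_n) : 'M[algC]_(n, 4) := \matrix_(i < n, k < 4) f k i 0.

Lemma colsP n (f : nat -> 'cV[algC]_n) j : (j < 4)%N -> cols f *m e4 j = f j.
Proof.
move=> hj; rewrite /e4 -colE; apply/matrixP=> i z; rewrite !mxE inordK //.
by rewrite [z]ord1.
Qed.

Lemma mxbP (f : nat -> 'cV[algC]_4) j : (j < 4)%N -> mx_of_basis f *m e4 j = f j.
Proof. exact: (@colsP 4 f j). Qed.

Lemma mx4_ext n (A B : 'M[algC]_(n, 4)) :
  (forall j, (j < 4)%N -> A *m e4 j = B *m e4 j) -> A = B.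
Proof.
move=> H; apply/matrixP=> i k; have := H k (ltn_ord k).
rewrite /e4 inord_val -!colE => /matrixP/(_ i 0); rewrite !mxE //.
Qed.

Definition good (V : srep) : Prop :=
  [/\ sH V = 0, sP V *m sQp V = - (sQp V *m sP V), sP V *m sQm V = - (sQm V *m sP V),
      sG V *m sP V = sP V *m sG V &
   [/\ sG V *m sQp V - sQp V *m sG V = sQp V, sG V *m sQm V - sQm V *m sG V = - sQm V,
      sQp V *m sQm V + sQm V *m sQp V = 0, sQp V *m sQp V = 0 & sQm V *m sQm V = 0]].

Ltac vec_simpl :=
  rewrite ?mulmxDl ?mulmxDr ?mulmxBl ?mulmxBr ?mulmxN ?mulNmx ?mulmx0 ?mul0mx
    -?mulmxA -?scalemxAr -?scalemxAl ?mxbP //=.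

Ltac ext4 :=
  apply: mx4_ext; case => [|[|[|[|?]]]] // _;
  do 6 vec_simpl; apply/matrixP=> ? ?; rewrite !mxE; ring.

Lemma good_III g b : good (III g b).
Proof.
split; rewrite /III /= //; try split; ext4.
Qed.

Section Comm.
Variable n : nat.
Implicit Types X Y Z : 'M[algC]_n.
Definition mcomm X Y := X *m Y - Y *m X.
Definition macomm X Y := X *m Y + Y *m X.
Lemma mcommDl X Y Z : mcomm (X + Y) Z = mcomm X Z + mcomm Y Z.
Proof. by rewrite /mcomm mulmxDl mulmxDr opprD addrACA. Qed.
Lemma mcommDr X Y Z : mcomm Z (X + Y) = mcomm Z X + mcomm Z Y.
Proof. by rewrite /mcomm mulmxDl mulmxDr opprD addrACA. Qed.
Lemma macommDl X Y Z : macomm (X + Y) Z = macomm X Z + macomm Y Z.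
Proof. by rewrite /macomm mulmxDl mulmxDr addrACA. Qed.
Lemma macommDr X Y Z : macomm Z (X + Y) = macomm Z X + macomm Z Y.
Proof. by rewrite /macomm mulmxDl mulmxDr addrACA. Qed.
End Comm.

Lemma mcommT m p (A C : 'M[algC]_m) (B D : 'M[algC]_p) :
  mcomm (A *t B) (C *t D) = (A *m C) *t (B *m D) - (C *m A) *t (D *m B).
Proof. by rewrite /mcomm !tensmx_mul. Qed.
Lemma macommT m p (A C : 'M[algC]_m) (B D : 'M[algC]_p) :
  macomm (A *t B) (C *t D) = (A *m C) *t (B *m D) + (C *m A) *t (D *m B).
Proof. by rewrite /macomm !tensmx_mul. Qed.

Lemma tensmxBl m n p q (A B : 'M[algC]_(m, n)) (C : 'M[algC]_(p, q)) :
  (A - B) *t C = A *t C - B *t C.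
Proof. by rewrite tensmxDl tensmxNl. Qed.
Lemma tensmxBr m n p q (A : 'M[algC]_(m, n)) (C D : 'M[algC]_(p, q)) :
  A *t (C - D) = A *t C - A *t D.
Proof. by rewrite tensmxDr tensmxNr. Qed.

Lemma good_tens V W : good V -> good W -> good (stensor V W).
Proof.
case=> h1 h2 h3 h4 [h5 h6 h7 h8 h9] [k1 k2 k3 k4 [k5 k6 k7 k8 k9]].
split=> /=.
- by rewrite h1 k1 tens0mx tensmx0 addr0.
- rewrite mulmxDr mulmxDl !tensmx_mul ?mulmx1 ?mul1mx h2 k2 tensmxNl tensmxNr.
  by rewrite opprD.
- rewrite mulmxDr mulmxDl !tensmx_mul ?mulmx1 ?mul1mx h3 k3 tensmxNl tensmxNr.
  by rewrite opprD.
- by rewrite mulmxDr mulmxDl !tensmx_mul ?mulmx1 ?mul1mx h4 k4.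
split.
- rewrite -/(mcomm _ _) mcommDl !mcommDr !mcommT ?mulmx1 ?mul1mx -tensmxBl h5 h4 subrr.
  by rewrite subrr -tensmxBr k5 ?addr0 ?add0r.
- rewrite -/(mcomm _ _) mcommDl !mcommDr !mcommT ?mulmx1 ?mul1mx -tensmxBl h6 h4 subrr.
  by rewrite subrr -tensmxBr k6 ?addr0 ?add0r tensmxNl tensmxNr opprD.
- rewrite -/(macomm _ _) macommDl !macommDr !macommT ?mulmx1 ?mul1mx -tensmxDl h7.
  rewrite -!tensmxDl -tensmxDr k7 h2 h3 addrN addNr !tens0mx tensmx0.
  by rewrite !addr0.
- rewrite mulmxDr !mulmxDl !tensmx_mul ?mulmx1 ?mul1mx h8 k8 tens0mx tensmx0 h2.
  by rewrite tensmxNl add0r addr0 addNr.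
- rewrite mulmxDr !mulmxDl !tensmx_mul ?mulmx1 ?mul1mx h9 k9 tens0mx tensmx0 h3.
  by rewrite tensmxNl add0r addr0 addNr.
Qed.

Definition Tw (V : srep) (w : 'cV[algC]_(sdim V)) : 'M[algC]_(sdim V, 4) :=
  cols (fun j => match j with 0 => w | 1 => sQp V *m w | 2 => sQm V *m w
                 | _ => sQp V *m (sQm V *m w) end).

Lemma Tw_intw V (g : int) (b : bool) (w : 'cV[algC]_(sdim V)) : good V ->
  sP V *m w = (-1) ^+ b *: w -> sG V *m w = ((g%:~R : algC) - 1) *: w ->
  intw (V := V) (W := III g b) (Tw w).
Proof.
case=> h1 h2 h3 h4 [h5 h6 h7 h8 h9] hP hG.
have rP1 x : sP V *m (sQp V *m x) = - (sQp V *m (sP V *m x)).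
  by rewrite mulmxA h2 mulNmx mulmxA.
have rP2 x : sP V *m (sQm V *m x) = - (sQm V *m (sP V *m x)).
  by rewrite mulmxA h3 mulNmx mulmxA.
have rG1 x : sG V *m (sQp V *m x) = sQp V *m (sG V *m x) + sQp V *m x.
  have e : sG V *m sQp V = sQp V + sQp V *m sG V by apply/eqP; rewrite -subr_eq h5.
  by rewrite mulmxA e mulmxDl addrC mulmxA.
have rG2 x : sG V *m (sQm V *m x) = sQm V *m (sG V *m x) - sQm V *m x.
  have e : sG V *m sQm V = - sQm V + sQm V *m sG V by apply/eqP; rewrite -subr_eq h6.
  by rewrite mulmxA e mulmxDl addrC mulmxA mulNmx.
have rQ1 x : sQp V *m (sQp V *m x) = 0 by rewrite mulmxA h8 mul0mx.
have rQ2 x : sQm V *m (sQm V *m x) = 0 by rewrite mulmxA h9 mul0mx.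
have rQ3 x : sQm V *m (sQp V *m x) = - (sQp V *m (sQm V *m x)).
  have e : sQm V *m sQp V = - (sQp V *m sQm V) by apply/eqP; rewrite -addr_eq0 addrC h7.
  by rewrite mulmxA e mulNmx mulmxA.
rewrite /Tw /intw h1 mul0mx mulmx0; split => //; apply: mx4_ext;
  case => [|[|[|[|?]]]] // _; rewrite -!mulmxA /III /=.
all: rewrite ?mxbP //= -?scalemxAr ?mulmxN ?mulmx0 ?colsP //= ?mulmxDr ?mulmxBr ?mulmxN
   ?rP1 ?rP2 ?rG1 ?rG2 ?rQ1 ?rQ2 ?rQ3 ?mulmxDr ?mulmxBr ?mulmxN ?rP1 ?rP2 ?rG1 ?rG2
   ?rQ1 ?rQ2 ?rQ3 ?hP ?hG -?scalemxAr ?mulmxN ?mulmx0 ?oppr0.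
all: try (apply/matrixP=> ? ?; rewrite !mxE; ring).
Qed.

Definition sF (s : algC) (k i a b : nat) : algC :=
  match k, i, a, b with
  | 0, 0, 0, 0 => 1
  | 0, 1, 0, 1 => s
  | 0, 2, 0, 2 => s
  | 0, 3, 0, 3 => 1
  | 1, 0, 0, 1 => - s
  | 1, 0, 1, 0 => 1
  | 1, 1, 1, 1 => - s
  | 1, 2, 0, 3 => 1
  | 1, 2, 1, 2 => - s
  | 1, 3, 1, 3 => 1
  | 2, 0, 0, 2 => - s
  | 2, 0, 2, 0 => 1
  | 2, 1, 0, 3 => -1
  | 2, 1, 2, 1 => - s
  | 2, 2, 2, 2 => - s
  | 2, 3, 2, 3 => 1
  | 3, 0, 0, 3 => 1
  | 3, 0, 1, 2 => - s
  | 3, 0, 2, 1 => s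
  | 3, 0, 3, 0 => 1
  | 3, 1, 1, 3 => 1
  | 3, 1, 3, 1 => s
  | 3, 2, 2, 3 => 1
  | 3, 2, 3, 2 => s
  | 3, 3, 3, 3 => 1
  | _, _, _, _ => 0
  end.

Definition Sk (s : algC) (k : nat) : 'M[algC]_(4, 4 * 4) :=
  \matrix_(i < 4, j < 4 * 4) sF s k i (mxtens_unindex j).1 (mxtens_unindex j).2.

Lemma Sk_tens s k a b : (a < 4)%N -> (b < 4)%N ->
  Sk s k *m (e4 a *t e4 b) = \col_(i < 4) sF s k i a b.
Proof.
move=> ha hb.
have -> : e4 a *t e4 b = delta_mx (mxtens_index (inord a : 'I_4, inord b : 'I_4)) 0.
  apply/matrixP=> i j.
  case: (mxtens_indexP i)=> i0 i1; case: (mxtens_indexP j)=> j0 j1.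
  rewrite tensmxE !mxE [j0]ord1 [j1]ord1.
  rewrite (inj_eq (can_inj (@mxtens_indexK 4 4))) xpair_eqE.
  have -> : mxtens_index ((0 : 'I_1), (0 : 'I_1)) == 0 by apply/eqP/val_inj.
  by case: (i0 == inord a); case: (i1 == inord b); rewrite /= ?mulr1 ?mulr0 ?mul0r.
rewrite -colE; apply/matrixP=> i j; rewrite !mxE mxtens_indexK /= !inordK //.
Qed.

Definition wv (l : nat) : 'cV[algC]_(4 * 4) := e4 l *t e4 0%N.


Section IIIcols.
Variables (g : int) (b : bool).
Lemma III_P0 : sP (III g b) *m e4 0%N = (-1) ^+ b *: e4 0%N.
Proof. exact: mxbP. Qed.
Lemma III_P1 : sP (III g b) *m e4 1%N = - (-1) ^+ b *: e4 1%N.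
Proof. exact: mxbP. Qed.
Lemma III_P2 : sP (III g b) *m e4 2%N = - (-1) ^+ b *: e4 2%N.
Proof. exact: mxbP. Qed.
Lemma III_P3 : sP (III g b) *m e4 3%N = (-1) ^+ b *: e4 3%N.
Proof. exact: mxbP. Qed.
Lemma III_G0 : sG (III g b) *m e4 0%N = (g%:~R - 1) *: e4 0%N.
Proof. exact: mxbP. Qed.
Lemma III_G1 : sG (III g b) *m e4 1%N = g%:~R *: e4 1%N.
Proof. exact: mxbP. Qed.
Lemma III_G2 : sG (III g b) *m e4 2%N = (g%:~R - 2) *: e4 2%N.
Proof. exact: mxbP. Qed.
Lemma III_G3 : sG (III g b) *m e4 3%N = (g%:~R - 1) *: e4 3%N.
Proof. exact: mxbP. Qed.
Lemma III_Qp0 : sQp (III g b) *m e4 0%N = e4 1%N.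
Proof. exact: mxbP. Qed.
Lemma III_Qp1 : sQp (III g b) *m e4 1%N = 0.
Proof. exact: mxbP. Qed.
Lemma III_Qp2 : sQp (III g b) *m e4 2%N = e4 3%N.
Proof. exact: mxbP. Qed.
Lemma III_Qp3 : sQp (III g b) *m e4 3%N = 0.
Proof. exact: mxbP. Qed.
Lemma III_Qm0 : sQm (III g b) *m e4 0%N = e4 2%N.
Proof. exact: mxbP. Qed.
Lemma III_Qm1 : sQm (III g b) *m e4 1%N = - e4 3%N.
Proof. exact: mxbP. Qed.
Lemma III_Qm2 : sQm (III g b) *m e4 2%N = 0.
Proof. exact: mxbP. Qed.
Lemma III_Qm3 : sQm (III g b) *m e4 3%N = 0.
Proof. exact: mxbP. Qed.
End IIIcols.

Definition IIIE := (III_P0, III_P1, III_P2, III_P3, III_G0, III_G1, III_G2, III_G3, III_Qp0, III_Qp1, III_Qp2, III_Qp3, III_Qm0, III_Qm1, III_Qm2, III_Qm3).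

Lemma stensorE V W : [/\ sP (stensor V W) = sP V *t sP W,
  sG (stensor V W) = sG V *t 1%:M + 1%:M *t sG W,
  sQp (stensor V W) = sQp V *t 1%:M + sP V *t sQp W &
  sQm (stensor V W) = sQm V *t 1%:M + sP V *t sQm W].
Proof. by []. Qed.

Lemma e4_E k : (k < 4)%N -> e4 k = \col_(i < 4) ((i : nat) == k)%:R.
Proof.
move=> hk; apply/matrixP=> i j; rewrite !mxE [j]ord1 eqxx andbT -val_eqE /= inordK //.
Qed.

Lemma tmul4 (A B : 'M[algC]_4) (u v : 'cV[algC]_4) :
  (A *t B) *m (u *t v) = (A *m u) *t (B *m v).
Proof. exact: tensmx_mul. Qed.

Lemma Tw0 V (w : 'cV[algC]_(sdim V)) : Tw w *m e4 0%N = w.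
Proof. exact: colsP. Qed.
Lemma Tw1 V (w : 'cV[algC]_(sdim V)) : Tw w *m e4 1%N = sQp V *m w.
Proof. exact: colsP. Qed.
Lemma Tw2 V (w : 'cV[algC]_(sdim V)) : Tw w *m e4 2%N = sQm V *m w.
Proof. exact: colsP. Qed.
Lemma Tw3 V (w : 'cV[algC]_(sdim V)) : Tw w *m e4 3%N = sQp V *m (sQm V *m w).
Proof. exact: colsP. Qed.

Lemma Sk_Tw (g : int) (b : bool) k l : (k < 4)%N -> (l < 4)%N ->
  Sk ((-1) ^+ b) k *m Tw (V := stensor (III g b) (III 1 false)) (wv l) =
  if k == l then 1%:M else 0.
Proof.
have [eP eG eQp eQm] := stensorE (III g b) (III 1 false).
have t0 := @Tw0 (stensor (III g b) (III 1 false)).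
have t1 := @Tw1 (stensor (III g b) (III 1 false)).
have t2 := @Tw2 (stensor (III g b) (III 1 false)).
have t3 := @Tw3 (stensor (III g b) (III 1 false)).
case: k => [|[|[|[|?]]]] // _; case: l => [|[|[|[|?]]]] // _;
apply: mx4_ext; case => [|[|[|[|?]]]] // _; rewrite -mulmxA ?t0 ?t1 ?t2 ?t3 /wv ?eQp ?eQm.
all: do 3 rewrite ?mulmxDl ?mulmxDr ?tmul4 ?mul1mx ?IIIE ?tensmxZl ?tensmxZr
  ?tensmxNl ?tensmxNr ?tens0mx ?tensmx0 -?scalemxAr ?mulmxN ?mulmx0 ?oppr0 ?addr0 ?add0r.
all: rewrite ?mul1mx ?mul0mx ?Sk_tens // ?e4_E //.
all: apply/matrixP=> i z; rewrite !mxE; case: i => [[|[|[|[|?]]]] Hi] //=.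
all: clear; case: b; rewrite /= ?expr0 ?expr1; ring.
Qed.

Lemma colrow_one a r N (S1 : 'M[algC]_(a, N)) (S2 : 'M[algC]_(r, N)) T1 T2 :
  S1 *m T1 = 1%:M -> S1 *m T2 = 0 -> S2 *m T1 = 0 -> S2 *m T2 = 1%:M ->
  col_mx S1 S2 *m row_mx T1 T2 = 1%:M.
Proof. by move=> h1 h2 h3 h4; rewrite mul_col_row h1 h2 h3 h4 -scalar_mx_block. Qed.

Section Base.
Variables (g : int) (b : bool).
Let V := stensor (III g b) (III 1 false).

Lemma wv_P l : (l < 4)%N ->
  sP V *m wv l = (-1) ^+ (if (l == 0%N) || (l == 3%N) then b else ~~ b) *: wv l.
Proof.
rewrite /V /wv; have [eP eG eQp eQm] := stensorE (III g b) (III 1 false).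
case: l => [|[|[|[|?]]]] // _; rewrite eP tmul4 !IIIE ?tensmxZl ?tensmxZr /=.
all: case: b => /=; apply/matrixP=> i j; rewrite !mxE; ring.
Qed.

Lemma wv_G l : (l < 4)%N ->
  sG V *m wv l = (((match l with 0 => g | 1 => g + 1 | 2 => g - 1 | _ => g end)%:~R : algC) - 1) *: wv l.
Proof.
rewrite /V /wv; have [eP eG eQp eQm] := stensorE (III g b) (III 1 false).
case: l => [|[|[|[|?]]]] // _; rewrite eG mulmxDl !tmul4 ?mul1mx !IIIE ?tensmxZl ?tensmxZr /=.
all: rewrite ?intrD ?intrB; apply/matrixP=> i j; rewrite !mxE; ring.
Qed.

Lemma base_iso : siso V (sbigsum [:: III g b; III (g + 1) (~~ b); III (g - 1) (~~ b); III g b]).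
Proof.
have gV : good V by apply: good_tens; apply: good_III.
pose s : algC := (-1) ^+ b.
pose T := row_mx (Tw (V := V) (wv 0)) (row_mx (Tw (V := V) (wv 1))
           (row_mx (Tw (V := V) (wv 2)) (row_mx (Tw (V := V) (wv 3)) (0 : 'M[algC]_(sdim V, 0))))).
pose S := col_mx (Sk s 0) (col_mx (Sk s 1) (col_mx (Sk s 2) (col_mx (Sk s 3)
            (0 : 'M[algC]_(0, sdim V))))).
have ST : S *m T = 1%:M.
  have e k l : (k < 4)%N -> (l < 4)%N -> Sk s k *m Tw (V := V) (wv l) = if k == l then 1%:M else 0.
    exact: Sk_Tw.
  rewrite /S /T.
  do 4 (refine (colrow_one _ _ _ _);
    [ by rewrite e | by rewrite ?mul_mx_row ?e //= ?mulmx0 ?row_mx0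
    | by rewrite ?mul_col_mx ?e //= ?mul0mx ?col_mx0 | ]).
  by rewrite flatmx0 [1%:M]flatmx0.
apply: (@sisoP V (sbigsum [:: III g b; III (g + 1) (~~ b); III (g - 1) (~~ b); III g b]) T S).
- exact: (@mulmx1C _ 16 S T).
- exact: ST.
rewrite /T; apply: intw_row; last apply: intw_row; last apply: intw_row;
  last apply: intw_row; last apply: intw0.
all: apply: Tw_intw => //; [exact: wv_P | exact: wv_G].
Qed.
End Base.

Ltac vec_simpl2 :=
  rewrite ?mul1mx ?mulmxDl ?mulmxDr ?mulmxBl ?mulmxBr ?mulmxN ?mulNmx ?mulmx0 ?mul0mx
    -?mulmxA -?scalemxAr -?scalemxAl ?mxbP //=.

Ltac ext4b :=
  apply: mx4_ext; case => [|[|[|[|?]]]] // _;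
  do 6 vec_simpl2; apply/matrixP=> ? ?; rewrite !mxE; ring.

Lemma adj_iso : siso adjoint_gl11 (III 1 false).
Proof.
pose T := mx_of_basis (fun j => match j with 0 => - e4 1 | 1 => e4 2 | 2 => - e4 3 | _ => - e4 0 end).
pose S := mx_of_basis (fun j => match j with 0 => - e4 3 | 1 => - e4 0 | 2 => e4 1 | _ => - e4 2 end).
apply: (@sisoP adjoint_gl11 (III 1 false) T S); rewrite /T /S.
- ext4b.
- ext4b.
split; rewrite /adjoint_gl11 /III /=; ext4b.
Qed.

Lemma stpow_iso A B n : siso A B -> siso (stpow A n) (stpow B n).
Proof.
move=> h; elim: n => [|n IH] /=; first exact: siso_refl.
exact: siso_tens.
Qed.

Lemma tens1_4 (A : 'M[algC]_4) : (1%:M : 'M[algC]_1) *t A = A.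
Proof.
apply/matrixP=> i j.
case: (mxtens_indexP i)=> i0 i1; case: (mxtens_indexP j)=> j0 j1.
rewrite tensmxE [i0]ord1 [j0]ord1 !mxE eqxx mul1r.
by congr (A _ _); apply: val_inj.
Qed.

Lemma siso_zeror V : siso V (sdsum V szero).
Proof.
apply: (@siso_dsum V V szero 1%:M 0 1%:M 0).
- exact: intw1.
- exact: intw0.
- by rewrite mulmx1.
- by rewrite thinmx0 [1%:M]thinmx0.
- by rewrite mulmx0.
- by rewrite mul0mx.
- by rewrite mulmx1 mulmx0 addr0.
Qed.

Lemma stpow1 : siso (stpow (III 1 false) 1) (sbigsum [:: III 1 false]).
Proof.
apply: siso_trans (siso_zeror _).
apply: (@sisoP (stpow (III 1 false) 1) (III 1 false) (1%:M : 'M_4) (1%:M : 'M_4)).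
- by rewrite mulmx1.
- by rewrite mulmx1.
split; rewrite /= ?tens0mx ?add0r tens1_4 mulmx1 mul1mx //.
Qed.

Definition IIIp (p : int * bool) : srep := III p.1 p.2.
Definition stepL (p : int * bool) : seq (int * bool) :=
  [:: (p.1, p.2); (p.1 + 1, ~~ p.2); (p.1 - 1, ~~ p.2); (p.1, p.2)].
Fixpoint Ls (m : nat) : seq (int * bool) :=
  match m with 0 => [:: (1, false)] | m'.+1 => flatten (map stepL (Ls m')) end.

Lemma Ls_iso m : siso (stpow (III 1 false) m.+1) (sbigsum (map IIIp (Ls m))).
Proof.
elim: m => [|m IH]; first exact: stpow1.
rewrite [stpow _ _.+2]/=.
apply: siso_trans (siso_tens IH (siso_refl (III 1 false))) _.
apply: siso_trans (sbigsum_tens _ _) _.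
rewrite -map_comp.
apply: siso_trans (@sbigsum_congr _ _ (fun p => sbigsum (map IIIp (stepL p))) _ _) _.
  by case=> g b; exact: base_iso.
rewrite /= map_flatten -map_comp.
apply: siso_sym; apply: siso_trans (sbigsum_flatten _) _.
rewrite -map_comp; exact: siso_refl.
Qed.

Definition cl (l : int) (L : seq (int * bool)) := count (fun p : int * bool => p.1 == l) L.

Lemma cnt_step L l :
  cl l (flatten (map stepL L)) = (2 * cl l L + cl (l - 1) L + cl (l + 1) L)%N.
Proof.
rewrite /cl; elim: L => [|[x b] L IH] //=.
rewrite IH.
have e1 : (x + 1 == l) = (x == l - 1).
  by apply/eqP/eqP => h; lia.
have e2 : (x - 1 == l) = (x == l + 1).
  by apply/eqP/eqP => h; lia.
rewrite e1 e2.
case: (x == l); case: (x == l - 1); case: (x == l + 1); rewrite /=; lia.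
Qed.

Definition cntf (m : nat) (l : int) : nat :=
  match ((m.+1)%:Z - l)%R with Posz k => 'C(m.*2, k) | Negz _ => 0%N end.

Lemma count_Ls m l : cl l (Ls m) = cntf m l.
Proof.
elim: m l => [|m IH] l.
  rewrite /cl /cntf /=.
  case E: (1%:Z - l) => [k|k].
  - case: k E => [|k] E.
      by have -> : l = 1 by lia.
    have /negbTE -> : 1 != l by apply/eqP; lia.
    by rewrite bin0n.
  - by have /negbTE -> : 1 != l by apply/eqP; lia.
rewrite /= cnt_step !IH /cntf.
have E1 : (m.+1%:Z - l) = (m.+2%:Z - l) - 1 by lia.
have E2 : (m.+1%:Z - (l - 1)) = (m.+2%:Z - l) by lia.
have E3 : (m.+1%:Z - (l + 1)) = (m.+2%:Z - l) - 2 by lia.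
rewrite E1 E2 E3.
case: (m.+2%:Z - l) => [[|[|j]]|j].
- by rewrite /= bin0.
- by rewrite /= bin0 doubleS !bin1; lia.
- have -> : (j.+2%:Z - 1) = j.+1 by lia.
  have -> : (j.+2%:Z - 2) = j by lia.
  by rewrite /= doubleS !binS; lia.
- have -> : (Negz j - 1) = Negz j.+1 by lia.
  by have -> : (Negz j - 2) = Negz j.+2 by lia.
Qed.

Lemma perm_group (L : seq (int * bool)) (W : seq int) : uniq W ->
  all (fun p : int * bool => p.1 \in W) L ->
  perm_eq L (flatten [seq [seq p <- L | p.1 == l] | l <- W]).
Proof.
elim: W L => [|l W IH] L /=.
  by case: L => //= p L' /andP[].
move=> /andP[lW uW] hall.
rewrite -(perm_filterC (fun p : int * bool => p.1 == l) L) perm_cat2l.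
have hall' : all (fun p : int * bool => p.1 \in W) [seq p <- L | predC (fun p : int * bool => p.1 == l) p].
  rewrite all_filter; apply/allP=> p pL; apply/implyP => /= hne.
  by have := allP hall p pL; rewrite inE (negbTE hne).
apply: perm_trans (IH _ uW hall') _.
have -> : [seq [seq p <- [seq p <- L | predC (fun p : int * bool => p.1 == l) p] | p.1 == l0] | l0 <- W]
    = [seq [seq p <- L | p.1 == l0] | l0 <- W].
  apply/eq_in_map => l0 hl0; rewrite -filter_predI; apply: eq_filter => p /=.
  have ne : l0 != l by apply: contraNneq lW => <-.
  by case: eqP => // ->; rewrite ne.
exact: perm_refl.
Qed.

Lemma pair_map (l : int) (s : seq (int * bool)) : all (fun p : int * bool => p.1 == l) s ->
  s = [seq (l, b) | b <- [seq p.2 | p <- s]].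
Proof.
elim: s => [|[x b] s IH] //= /andP[/eqP -> h].
by rewrite -IH.
Qed.

Lemma mkseq_pair (l : int) (bs : seq bool) :
  [seq (l, nth false bs j) | j <- iota 0 (size bs)] = [seq (l, b) | b <- bs].
Proof.
by rewrite -{3}(mkseq_nth false bs) /mkseq -map_comp.
Qed.


Lemma wr_uniq n : uniq (weight_range n).
Proof.
rewrite /weight_range map_inj_uniq ?iota_uniq // => x y /= /addrI.
by move=> [].
Qed.

Lemma Ls_mem m p : p \in Ls m -> p.1 \in weight_range m.+1.
Proof.
move=> hp.
have : (0 < cl p.1 (Ls m))%N.
  by rewrite /cl -has_count; apply/hasP; exists p.
rewrite count_Ls /cntf.
case E: (m.+1%:Z - p.1) => [k|k] // hk.
have hk2 : (k <= m.*2)%N by rewrite -bin_gt0.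
apply/mapP; exists (m.*2 - k)%N; first by rewrite mem_iota; lia.
lia.
Qed.

Theorem proposition2p3 :
  siso adjoint_gl11 (III 1 false) /\
  forall n : nat, (1 <= n)%N ->
    siso (stpow adjoint_gl11 n) (stpow (III 1 false) n) /\
    exists par : int -> nat -> bool,
      siso (stpow (III 1 false) n) (decomposition n par).
Proof.
split; first exact: adj_iso.
move=> n hn; split; first exact: stpow_iso adj_iso.
case: n hn => // m _.
pose par (l : int) (j : nat) := nth false [seq p.2 | p <- Ls m & p.1 == l] j.
exists par.
apply: siso_trans (Ls_iso m) _.
pose W := weight_range m.+1.
pose D := flatten [seq [seq (l, par l j) | j <- iota 0 'C(2 * m.+1 - 2, `|m.+1%:Z - l|%N)] | l <- W].
have -> : decomposition m.+1 par = sbigsum (map IIIp D).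
  rewrite /decomposition /D map_flatten -map_comp; congr (sbigsum (flatten _)).
  by apply: eq_map => l /=; rewrite -map_comp.
apply: sbigsum_perm.
have hall : all (fun p : int * bool => p.1 \in W) (Ls m) by apply/allP => p; apply: Ls_mem.
apply: perm_trans (perm_group (wr_uniq _) hall) _.
rewrite /D.
suff -> : [seq [seq p <- Ls m | p.1 == l] | l <- W] =
  [seq [seq (l, par l j) | j <- iota 0 'C(2 * m.+1 - 2, `|m.+1%:Z - l|%N)] | l <- W].
  exact: perm_refl.
apply/eq_in_map => l hl.
have hc : 'C(2 * m.+1 - 2, `|m.+1%:Z - l|%N) = size [seq p.2 | p <- Ls m & p.1 == l].
  rewrite size_map size_filter -/(cl l (Ls m)) count_Ls /cntf.
  have : (l <= m.+1%:Z).
    by move: hl => /mapP[k hk ->]; rewrite mem_iota in hk; lia.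
  case E: (m.+1%:Z - l) => [k|k] hl2; last by lia.
  by rewrite /=; congr 'C(_, _); lia.
rewrite hc /par mkseq_pair -pair_map //.
by rewrite all_filter; apply/allP=> p _; apply/implyP.
Qed.
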